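(* Let $n\ge1$, $1\le s\le n$, $A_1,\dots,A_s\subset\mathbb Z^n$ finite, $m_1+\dots+m_s=n$ nonnegative integers, and let $b:A_1\sqcup\cdots\sqcup A_s\to\mathbb R$ be a lifting in general position. Let $W\subset A_1\sqcup\cdots\sqcup A_s$ and suppose that $\Xi(W)$ contains a line. Then $V(\mathrm{conv}(A_1),m_1;\dots;\mathrm{conv}(A_s),m_s)=0$.
   Context: A lifting $b$, written $b(i,\mathbf a)$ for $\mathbf a\in A_i$, is in general position if for every subset $S$ of $\{[-\mathrm e_i,\mathbf a,b(i,\mathbf a)]:\mathbf a\in A_i\}\subset\mathbb R^s\times\mathbb R^n\times\mathbb R$ of cardinality at most $n+s+1$, either $S$ is linearly independent or $[0,\dots,0,1]$ is a linear combination of $S$. For $\boldsymbol\xi\in(\mathbb R^n)^*$, $\lambda_i(\boldsymbol\xi)=\max_{\mathbf a\in A_i}(\boldsymbol\xi(\mathbf a)-b(i,\mathbf a))$. For $W\subset A_1\sqcup\cdots\sqcup A_s$, $\Xi(W)=\{\boldsymbol\xi\in\mathbb R^n:\ \forall (i,\mathbf a),\ \mathbf a\boldsymbol\xi-\lambda_i(\boldsymbol\xi)-b(i,\mathbf a)\le0,\ \text{with equality iff }(i,\mathbf a)\in W\}$. $V(K_1,m_1;\dots;K_s,m_s)$ is the mixed volume of the $n$-tuple in which $K_i$ is repeated $m_i$ times, the mixed volume of $(\mathcal K_1,\dots,\mathcal K_n)$ being $\frac1{n!}\frac{\partial^n}{\partial t_1\cdots\partial t_n}\mathrm{Vol}(t_1\mathcal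 K_1+\cdots+t_n\mathcal K_n)$ at $t=0$. *)

(* Defs.v *)
From HB Require Import structures.
From mathcomp Require Import all_boot all_order all_algebra.
From mathcomp Require Import all_classical all_reals all_analysis.
Set Implicit Arguments. Unset Strict Implicit. Unset Printing Implicit Defensive.
Import Order.TTheory GRing.Theory Num.Theory numFieldNormedType.Exports.
Local Open Scope classical_set_scope.
Local Open Scope ring_scope.

Section Defs.
Variable R : realType.

(* iint k F g integrates F successively in the coordinates k-1, ..., 0,
   the other coordinates being given by g. *)
Fixpoint iint (k : nat) (F : (nat -> R) -> \bar R) (g : nat -> R) : \bar R :=
  match k with
  | 0 => F g
  | k'.+1 => (\int[@lebesgue_measure R]_x
               iint k' F (fun j => if j == k' then x else g j))%E
  end.

(* d-dimensional Lebesgue volume of K (as an iterated integral, = Lebesgue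
   measure by Fubini-Tonelli for measurable K). *)
Definition vol (d : nat) (K : set 'rV[R]_d) : \bar R :=
  iint d (fun g => (\1_K (\row_(i < d) g i))%:E) (fun _ => 0).

Definition mink_comb (d N : nat) (K : 'I_N -> set 'rV[R]_d) (t : 'rV[R]_N)
  : set 'rV[R]_d :=
  [set x | exists y : 'I_N -> 'rV[R]_d,
     (forall j, exists2 k, K j k & y j = t 0 j *: k) /\ x = \sum_(j < N) y j].

Definition rpartial (N : nat) (F : 'rV[R]_N -> R) (k : 'I_N) (t : 'rV[R]_N) : R :=
  lim ((fun h : R => h^-1 * (F (t + h *: delta_mx 0 k) - F t)) @ 0^'+).

Definition mpartial (N : nat) (F : 'rV[R]_N -> R) (ks : seq 'I_N) : 'rV[R]_N -> R :=
  foldr (fun k G => rpartial G k) F ks.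

(* Mixed volume of an n-tuple of convex bodies in R^n:
   (1/n!) d^n/(dt_1 ... dt_n) Vol(t_1 K_1 + ... + t_n K_n) at t = 0
   (derivatives taken in the orthant t >= 0, where the volume is a polynomial). *)
Definition mixed_volume (d : nat) (K : 'I_d -> set 'rV[R]_d) : R :=
  mpartial (fun t => fine (vol (mink_comb K t))) (enum 'I_d) 0 / (d`!)%:R.

Definition mixed_volume_mult (d s : nat) (K : 'I_s -> set 'rV[R]_d) (m : 'I_s -> nat)
  : R :=
  mixed_volume (fun j : 'I_d =>
    nth set0 (flatten [seq nseq (m i) (K i) | i <- enum 'I_s]) j).

Definition toR (n : nat) (a : 'rV[int]_n) : 'rV[R]_n := map_mx (fun z : int => z%:~R) a.

Definition conv_hull (n : nat) (A : seq 'rV[R]_n) : set 'rV[R]_n :=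
  [set x | exists w : 'I_(size A) -> R,
     (forall j, 0 <= w j) /\ \sum_j w j = 1 /\ x = \sum_j w j *: A`_j].

(* A lifting: b i a is b(i,a) (only its values for a \in A i matter). *)
Definition lift_vec (n s : nat) (b : 'I_s -> 'rV[int]_n -> R) (i : 'I_s) (a : 'rV[int]_n)
  : 'rV[R]_(s + n + 1) :=
  row_mx (row_mx (- delta_mx 0 i) (toR a)) (\row_(j < 1) b i a).

Definition lift_set (n s : nat) (A : 'I_s -> seq 'rV[int]_n)
  (b : 'I_s -> 'rV[int]_n -> R) : seq 'rV[R]_(s + n + 1) :=
  [seq lift_vec b i a | i <- enum 'I_s, a <- A i].

Definition last_unit (m : nat) : 'rV[R]_(m + 1) := row_mx 0 (\row_(j < 1) 1).

Definition general_position (n s : nat) (A : 'I_s -> seq 'rV[int]_n)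
  (b : 'I_s -> 'rV[int]_n -> R) : Prop :=
  forall S : seq 'rV[R]_(s + n + 1),
    uniq S -> {subset S <= lift_set A b} -> (size S <= n + s + 1)%N ->
    free S \/ last_unit (s + n) \in <<S>>%VS.

Definition pairing (n : nat) (xi : 'rV[R]_n) (a : 'rV[int]_n) : R :=
  \sum_(k < n) xi 0 k * (toR a) 0 k.

Definition lambda (n s : nat) (A : 'I_s -> seq 'rV[int]_n)
  (b : 'I_s -> 'rV[int]_n -> R) (i : 'I_s) (xi : 'rV[R]_n) : R :=
  match A i with
  | [::] => 0
  | a0 :: _ => \big[Num.max/(pairing xi a0 - b i a0)]_(a <- A i) (pairing xi a - b i a)
  end.

(* Xi(W), W a subset of the disjoint union, encoded as a set of pairs (i,a) *)
Definition Xi (n s : nat) (A : 'I_s -> seq 'rV[int]_n)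
  (b : 'I_s -> 'rV[int]_n -> R) (W : set ('I_s * 'rV[int]_n)) : set 'rV[R]_n :=
  [set xi | forall i a, a \in A i ->
     pairing xi a - lambda A b i xi - b i a <= 0 /\
     (pairing xi a - lambda A b i xi - b i a = 0 <-> W (i, a))].

Definition contains_line (n : nat) (X : set 'rV[R]_n) : Prop :=
  exists xi0 v : 'rV[R]_n, v != 0 /\ forall t : R, X (xi0 + t *: v).

End Defs.

(* Main.v *)
Require Import Defs.
From HB Require Import structures.
From mathcomp Require Import all_boot all_order all_algebra.
From mathcomp Require Import all_classical all_reals all_analysis.
Import Order.TTheory GRing.Theory Num.Theory numFieldNormedType.Exports.
Local Open Scope classical_set_scope.
Local Open Scope ring_scope.

Set Implicit Arguments. Unset Strict Implicit.
Section V.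
Variable R : realType.

Definition linf (d : nat) (v x : 'rV[R]_d) : R := \sum_j v 0 j * x 0 j.

Lemma iint0 k (F : (nat -> R) -> \bar R) (g : nat -> R) :
  (forall h, (forall j, (k <= j)%N -> h j = g j) -> F h = 0%E) -> iint k F g = 0%E.
Proof.
elim: k g => [|k IH] g H /=.
  by apply: H => j _.
rewrite (eq_integral (cst 0%E)); first by rewrite integral0.
move=> x _ /=; apply: IH => h Hh; apply: H => j kj.
rewrite Hh; last by apply: ltnW.
by rewrite ifN // neq_ltn kj orbT.
Qed.

Lemma vol_hyper d (K : set 'rV[R]_d) (v : 'rV[R]_d) c :
  v != 0 -> (forall x, K x -> linf v x = c) -> vol K = 0%E.
Proof.
case: d K v => [|d] K v v0 hK.
  by move: v0; rewrite thinmx0 eqxx.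
have [k0 Hk0]: exists k0 : 'I_d.+1, v 0 k0 != 0 /\ forall j : 'I_d.+1, (j < k0)%N -> v 0 j = 0.
  have ex : exists k, (k < d.+1)%N && (v 0 (inord k) != 0).
    have [j] : exists j : 'I_d.+1, v 0 j != 0.
      apply/existsP; apply: contraR v0 => /existsPn H.
      by apply/eqP/matrixP => i j; rewrite ord1 mxE; apply/eqP; move: (H j); rewrite negbK.
    move=> Hj; exists j; rewrite inord_val Hj andbT; exact: ltn_ord.
  case: (ex_minnP ex) => k /andP[kd Hk] Hmin.
  exists (inord k); split => //.
  move=> j jk; apply/eqP; apply: contraTT jk => Hj; rewrite -leqNgt inordK //.
  by apply: Hmin; rewrite ltn_ord inord_val.
case: Hk0 => vk0 vlt.
set F := fun g : nat -> R => ((\1_K (\row_(i < d.+1) g i) : R)%:E).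
have base : forall g, iint k0.+1 F g = 0%E.
  move=> g /=.
  set S := \sum_(j < d.+1) (if (k0 < j)%N then v 0 j * g j else 0).
  set r := (c - S) / v 0 k0.
  have Z : forall x, x != r ->
     iint k0 F (fun j => if j == k0 then x else g j) = 0%E.
    move=> x xr; apply: iint0 => h Hh.
    rewrite /F indicE; have [/set_mem /hK|nK] := boolP (_ \in K); last by [].

    have -> : linf v (\row_i h i) = v 0 k0 * x + S.
      rewrite /linf /S (bigD1 k0) //= [X in _ = _ + X](bigD1 k0) //= ltnn add0r.
      rewrite mxE Hh // eqxx; congr (_ + _).
      apply: eq_bigr => j jk; rewrite mxE.
      case: (ltngtP k0 j) => [kj|jk'|e].
      - by rewrite Hh ?ifN // ?(ltnW kj) // neq_ltn kj orbT.
      - by rewrite vlt // mul0r.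
      - by move: jk; rewrite (val_inj e) eqxx.
    move=> E; move: xr; rewrite /r -E addrK mulrC mulKf // eqxx //.
  rewrite -(@integral_setD1 _ _ r); last 2 first.
  - exact: measurableD.
  - move=> mD Y mY.
    have -> : (setT `\ r) `&` (fun x => iint k0 F (fun j => if j == k0 then x else g j)) @^-1` Y
         = (setT `\ r) `&` (fun _ : R => 0%E) @^-1` Y.
      apply/seteqP; split=> x [[_ /= xr] H]; (split; first by []);
        move: H; rewrite /= Z //; exact/eqP.
    rewrite preimage_cst; case: ifPn => _; rewrite ?setIT ?setI0 //.
  apply: integral0_eq => x [_ /= xr]; apply: Z; exact/eqP.
have up : forall k g, iint (k0.+1 + k) F g = 0%E.
  elim=> [|k IH] g; first by rewrite addn0 base.
  rewrite addnS /= (eq_integral (cst 0%E)); first by rewrite integral0.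
  by move=> x _; exact: IH.
rewrite /vol; have := up (d.+1 - k0.+1)%N (fun _ => 0); rewrite subnKC //; exact: ltn_ord.
Qed.

Definition flat d (v : 'rV[R]_d) (X : set 'rV[R]_d) :=
  forall x y, X x -> X y -> linf v x = linf v y.

Lemma linf_sum d (v : 'rV[R]_d) I (r : seq I) (P : pred I) (F : I -> 'rV[R]_d) :
  linf v (\sum_(i <- r | P i) F i) = \sum_(i <- r | P i) linf v (F i).
Proof.
rewrite /linf (exchange_big) /=; apply: eq_bigr => k _.
by rewrite summxE mulr_sumr.
Qed.

Lemma linfZ d (v : 'rV[R]_d) a x : linf v (a *: x) = a * linf v x.
Proof.
by rewrite /linf mulr_sumr; apply: eq_bigr => k _; rewrite mxE mulrCA.
Qed.

Lemma vol_flat d (v : 'rV[R]_d) K : v != 0 -> flat v K -> vol K = 0%E.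
Proof.
move=> v0 fK; have [[x0 Kx0]|nK] := pselect (exists x, K x).
  by apply: (vol_hyper (c := linf v x0) v0) => x Kx; apply: fK.
by apply: (vol_hyper (c := 0) v0) => x Kx; exfalso; apply: nK; exists x.
Qed.

Lemma mink_flat d N (v : 'rV[R]_d) (K : 'I_N -> set 'rV[R]_d) t :
  (forall j, flat v (K j)) -> flat v (mink_comb K t).
Proof.
move=> fK x y [yx [Hx ->]] [yy [Hy ->]]; rewrite !linf_sum.
apply: eq_bigr => j _.
have [kx Kx ->] := Hx j; have [ky Ky ->] := Hy j.
by rewrite !linfZ (fK j kx ky).
Qed.

Lemma mpartial0 N (ks : seq 'I_N) : mpartial (fun _ : 'rV[R]_N => 0) ks = (fun _ => 0).
Proof.
elim: ks => [|k ks IH] //=; rewrite IH; apply/funext => t.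
rewrite /rpartial.
have -> : (fun h : R => h^-1 * (0 - 0)) = (fun _ => 0 : R).
  by apply/funext => h; rewrite subrr mulr0.
exact: lim_cst.
Qed.

Lemma mixed_volume0 d (K : 'I_d -> set 'rV[R]_d) :
  (forall t, vol (mink_comb K t) = 0%E) -> mixed_volume K = 0.
Proof.
move=> H; rewrite /mixed_volume.
have -> : (fun t => fine (vol (mink_comb K t))) = (fun _ => 0 : R).
  by apply/funext => t; rewrite H.
by rewrite mpartial0 mul0r.
Qed.

Section AllP.
Variables (T : Type) (x0 : T) (P : T -> Prop).
Definition allP (l : seq T) := forall j, P (nth x0 l j).
Lemma allP_cat l1 l2 : allP l1 -> allP l2 -> allP (l1 ++ l2).
Proof. by move=> H1 H2 j; rewrite nth_cat; case: ifP. Qed.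
Lemma allP_nseq m x : P x0 -> P x -> allP (nseq m x).
Proof. by move=> H0 Hx j; rewrite nth_nseq; case: ifP. Qed.
End AllP.


Lemma pairingD n (x y : 'rV[R]_n) t a :
  pairing (x + t *: y) a = pairing x a + t * pairing y a.
Proof.
rewrite /pairing mulr_sumr -big_split; apply: eq_bigr => k _.
by rewrite !mxE mulrDl mulrA.
Qed.

Lemma bigmax_att (I : eqType) (f : I -> R) a0 (s : seq I) :
  exists2 a, a \in a0 :: s & \big[Num.max/f a0]_(a <- s) f a = f a.
Proof.
elim: s => [|x s [a Ha IH]]; first by exists a0; [rewrite mem_head | rewrite big_nil].
rewrite big_cons IH; case: (leP (f x) (f a)) => _.
- exists a => //; move: Ha; rewrite !inE => /orP[->|->] //; rewrite ?orbT //.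
- by exists x => //; rewrite !inE eqxx orbT.
Qed.

Lemma lambda_att n s (A : 'I_s -> seq 'rV[int]_n) (b : 'I_s -> 'rV[int]_n -> R) i (xi : 'rV[R]_n) : A i != [::] ->
  exists2 a, a \in A i & lambda A b i xi = pairing xi a - b i a.
Proof.
rewrite /lambda; case: (A i) => [//|a0 l] _.
have [a Ha ->] := bigmax_att (fun a => pairing xi a - b i a) a0 (a0 :: l).
exists a => //; move: Ha; rewrite inE => /orP[/eqP ->|//]; exact: mem_head.
Qed.

Lemma lin_bound (al be : R) : (forall t, al + t * be <= 0) -> be = 0.
Proof.
move=> H; apply/eqP; apply/negP => /negP b0.
have := H ((1 - al) / be); rewrite divfK // addrC subrK.
by rewrite ler10.
Qed.

End V.

From mathcomp Require Import ring lra.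

Theorem lemma7p2 (R : realType) (n s : nat) (A : 'I_s -> seq 'rV[int]_n)
  (m : 'I_s -> nat) (b : 'I_s -> 'rV[int]_n -> R) (W : set ('I_s * 'rV[int]_n)) :
  (1 <= n)%N -> (1 <= s)%N -> (s <= n)%N ->
  (forall i, A i != [::]) ->
  (\sum_(i < s) m i)%N = n ->
  general_position A b ->
  contains_line (Xi A b W) ->
  mixed_volume_mult (fun i => conv_hull [seq @toR R n a | a <- A i]) m = 0.
Proof.
move=> _ _ _ Ane _ _ [xi0 [v [v0 Hl]]].
have Hc : forall i, exists2 w, w \in A i &
    forall a, a \in A i -> pairing v a = pairing v w.
  move=> i; have [w wA Hw] := lambda_att b (xi0 + 0 *: v) (Ane i).
  have Ww : W (i, w).
    apply: (proj1 (Hl 0 i w wA).2); rewrite Hw; ring.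
  exists w => // a aA.
  apply/eqP; rewrite -subr_eq0; apply/eqP.
  apply: (lin_bound (al := pairing xi0 a - b i a - pairing xi0 w + b i w)) => t.
  have [Ha _] := Hl t i a aA; have [_ Hw'] := Hl t i w wA.
  have E := proj2 Hw' Ww.
  move: Ha E; rewrite !pairingD mulrBr; lra.
have Hflat : forall i, flat v (conv_hull [seq @toR R n a | a <- A i]).
  move=> i; have [w wA Hw] := Hc i.
  suff H : forall x, conv_hull [seq @toR R n a | a <- A i] x -> linf v x = pairing v w.
    by move=> x y /H -> /H ->.
  move=> x [c [_ [c1 ->]]]; rewrite linf_sum.
  transitivity (\sum_j c j * pairing v w); last by rewrite -mulr_suml c1 mul1r.
  apply: eq_bigr => j _; rewrite linfZ; congr (_ * _).
  have jl : (j < size (A i))%N by rewrite -(size_map (@toR R n)); exact: ltn_ord.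
  rewrite (nth_map (0 : 'rV[int]_n)) //; exact: Hw (mem_nth 0 jl).
rewrite /mixed_volume_mult; apply: mixed_volume0 => t; apply: (vol_flat v0).
apply: mink_flat => j.
have f0 : flat v (set0 : set 'rV[R]_n) by move=> x y [].
suff : allP set0 (flat v) (flatten [seq nseq (m i) (conv_hull [seq @toR R n a | a <- A i]) | i <- enum 'I_s]) by [].
elim: (enum 'I_s) => [|i l IH] /=; first by move=> k; rewrite nth_nil.
by apply: allP_cat => //; apply: allP_nseq.
Qed.
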